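(* Let $\Theta = (\Theta_1, \Theta_2)$ be such that $\bar\Theta:=\Theta-\Theta(\gamma=0)$ solves $\partial_t \bar \Theta_1 + 4 \gamma \partial_\gamma \bar \Theta_1 + 6 \bar \Theta_1 - 13 \bar \Theta_2 = 0$, $\partial_t \bar \Theta_2 + 4 \gamma \partial_\gamma \bar \Theta_2 + 9 \bar\Theta_2 - \frac{10} {1+\gamma^2}\big(\bar \Theta_1 + \gamma^2 \frac{2}{\pi}\int_0^\infty \bar \Theta_1\frac{d\gamma}{1+\gamma^2}\big) = 0$ with initial conditions $\Theta(t=0) = \Theta^{(0)}$. Then $$10 \int_0^t \Big(\frac{2}{\pi}\int_0^\infty \bar \Theta_1(s)\frac{d\gamma}{1+\gamma^2}\Big) \kappa(t-s)\, ds = \frac 2 \pi \mathcal{I}(\Theta^{(0)}) - \frac 2 \pi\int_0^\infty\Big(\bar{\Theta}^{(0)}_1 w_1(t) + \bar{\Theta}^{(0)}_2 w_2(t) \Big) \frac{d\gamma}{\gamma^2},$$ where $\kappa(r) := \frac 2 \pi \int_0^\infty \frac{w_2(r)}{1+\gamma^2} d \gamma$, $\mathcal{I}(\Theta^{(0)}) = \int_0^\infty \big(\bar{\Theta}^{(0)}_1 + \bar{\Theta}^{(0)}_2 \big)\frac{d\gamma}{\gamma^2}$, and $(w_1, w_2)$ solve on $[0,\infty)_t\times[0,\infty)_\gamma$: $\partial_t w_1 - 4 \gamma \partial_\gamma w_1 + 10 w_1 - \frac{10}{1+\gamma^2} w_2 = 0$, $\partial_t w_2 - 4 \gamma \partial_\gamma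 w_2 + 13 w_2 - 13 w_1 = 0$, with $(w_1, w_2)(t=0) = (1,1)$.
   Context: $\gamma=\tan\theta$, so $\frac{2}{\pi}\int_0^\infty f\frac{d\gamma}{1+\gamma^2}$ equals the angular average $\frac{2}{\pi}\int_0^{\pi/2} f\,d\theta$. $\bar\Theta^{(0)}=\Theta^{(0)}-\Theta^{(0)}(\gamma=0)$. *)

(* Defs.v *)
From HB Require Import structures.
From mathcomp Require Import all_boot all_order all_algebra.
From mathcomp Require Import all_classical all_reals all_analysis.
Set Implicit Arguments. Unset Strict Implicit. Unset Printing Implicit Defensive.
Import Order.TTheory GRing.Theory Num.Theory.
Import numFieldNormedType.Exports.
Local Open Scope classical_set_scope.
Local Open Scope ring_scope.

Definition int0oo {R : realType} (f : R -> R) : R :=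
  \int[(@lebesgue_measure R)]_(g in `]0%R, +oo[) f g.

Definition bar {R : realType} (Th : R -> R -> R) (t g : R) : R := Th t g - Th t 0.

Definition dt {R : realType} (F : R -> R -> R) (t g : R) : R := derive1 (fun s => F s g) t.
Definition dg {R : realType} (F : R -> R -> R) (t g : R) : R := derive1 (fun h => F t h) g.

Definition avg {R : realType} (f : R -> R) : R :=
  2 / pi * int0oo (fun g => f g / (1 + g ^+ 2)).

Definition wint {R : realType} (f : R -> R) : R := int0oo (fun g => f g / g ^+ 2).

Definition kappa {R : realType} (w2 : R -> R -> R) (r : R) : R := avg (w2 r).

Definition Ifun {R : realType} (Th01 Th02 : R -> R) : R :=
  wint (fun g => (Th01 g - Th01 0) + (Th02 g - Th02 0)).

(* Main.v *)
Require Import Defs.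
From HB Require Import structures.
From mathcomp Require Import all_boot all_order all_algebra.
From mathcomp Require Import all_classical all_reals all_analysis.
From mathcomp Require Import measurable_realfun.
From mathcomp.algebra_tactics Require Import ring lra.
Import Order.TTheory GRing.Theory Num.Theory.
Import numFieldNormedType.Exports.
Local Open Scope classical_set_scope.
Local Open Scope ring_scope.

Section H.
Context {R : realType}.
Notation mu := (@lebesgue_measure R).

Lemma m_cont : continuous (fun x : R => (1 + x ^+ 2)^-1).
Proof.
move=> x; apply: cvgV; first by rewrite gt_eqF // ltr_pwDl // sqr_ge0.
apply: cvgD; first exact: cvg_cst.
exact: exprn_continuous.
Qed.

Lemma m_int_cc : (\int[mu]_(x in `[0%R, +oo[) ((1 + x ^+ 2)^-1)%:E = (pi / 2)%:E)%E.
Proof.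
rewrite (@ge0_continuous_FTC2y _ _ atan 0 (pi/2)).
- by rewrite atan0 sube0.
- by move=> x _; rewrite invr_ge0 addr_ge0 // sqr_ge0.
- exact: continuous_subspaceT m_cont.
- exact: cvgy_atan.
- by move=> x _; exact: derivable_atan.
- by apply: cvg_at_right_filter; exact: continuous_atan.
- by move=> x _; rewrite derive1_atan.
Qed.
End H.
Section H2.
Context {R : realType}.
Notation mu := (@lebesgue_measure R).
Notation D := (`]0%R, +oo[%classic : set R).

Lemma m_integrable_cc : mu.-integrable `[0%R, +oo[ (EFin \o (fun x : R => (1 + x ^+ 2)^-1)).
Proof.
apply/integrableP; split.
  apply/measurable_realfun.measurable_EFinP.
  apply: measurable_funS (measurable_realfun.continuous_measurable_fun m_cont) => //.
rewrite (_ : (fun x => _) = (fun x : R => ((1 + x ^+ 2)^-1)%:E)); last by apply/funext => x /=; rewrite ger0_norm // invr_ge0 addr_ge0 // sqr_ge0.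
by rewrite m_int_cc ltry.
Qed.

Lemma m_integrable : mu.-integrable D (EFin \o (fun x : R => (1 + x ^+ 2)^-1)).
Proof.
apply: integrableS m_integrable_cc => //.
by apply: subset_itvr; rewrite bnd_simp.
Qed.

Lemma m_int : int0oo (fun x : R => (1 + x ^+ 2)^-1) = pi / 2.
Proof.
rewrite /int0oo Rintegral_itv_obnd_cbnd; last exact: m_integrable.
by rewrite /Rintegral m_int_cc.
Qed.

Lemma integ_bound (f : R -> R) (K : R) :
  {in D, continuous f} ->
  (forall x, 0 < x -> `|f x| <= K * (1 + x ^+ 2)^-1) ->
  mu.-integrable D (EFin \o f).
Proof.
move=> cf fK.
have mD : measurable D by [].
eapply le_integrable; [done| | |]; last first.
apply: integrableZl => //.
 have h := m_integrable. exact h.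
- move=> x; rewrite /= in_itv /= andbT => x0.
  rewrite lee_fin (le_trans (fK _ x0)) //.
  by rewrite ler_norm.
- have h := measurable_realfun.open_continuous_measurable_fun (interval_open _ _) cf.
  have h2 := (proj2 (measurable_realfun.measurable_EFinP _ _) (h isT isT)).
  exact h2.
Qed.

End H2.
Section H3.
Context {R : realType}.
Notation mu := (@lebesgue_measure R).
Notation D := (`]0%R, +oo[%classic : set R).

Lemma mfun_D (f : R -> R) : {in D, continuous f} ->
  measurable_fun D (EFin \o f).
Proof.
move=> cf.
have h := measurable_realfun.open_continuous_measurable_fun (interval_open _ _) cf.
have h2 := (proj2 (measurable_realfun.measurable_EFinP _ _) (h isT isT)).
exact h2.
Qed.

Lemma int_deriv0 (k Dk : R -> R) (K : R) :
  (forall x : R, 0 < x -> is_derive x 1 k (Dk x)) ->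
  {in D, continuous Dk} ->
  (forall x : R, 0 < x -> `|Dk x| <= K * (1 + x ^+ 2)^-1) ->
  k x @[x --> 0^'+] --> 0 -> k x @[x --> +oo] --> 0 ->
  int0oo Dk = 0.
Proof.
move=> dk cD bD k0 koo.
pose a n : R := (n.+2%:R)^-1.
pose b n : R := n.+2%:R.
have a0 n : 0 < a n by rewrite /a invr_gt0 ltr0n.
have ab n : a n < b n.
  by rewrite /a /b (@lt_trans _ _ 1) // ?invf_lt1 ?ltr1n // ltr0n.
have kc x : 0 < x -> {for x, continuous k}.
  move=> x0; apply/differentiable_continuous/derivable1_diffP.
  by have [] := dk x x0.
have Ik n : (\int[mu]_(x in `[a n, b n]) (Dk x)%:E = (k (b n) - k (a n))%:E)%E.
  rewrite EFinB; apply: continuous_FTC2 => //.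
  - apply: continuous_in_subspaceT => x; rewrite inE /= in_itv /= => /andP[ax _].
    apply: cD; rewrite inE /= in_itv /= andbT.
    exact: lt_le_trans ax.
  - split.
    + move=> x; rewrite in_itv /= => /andP[ax _].
      by have [] := dk x (lt_trans (a0 n) ax).
    + by apply: cvg_at_right_filter; exact: kc.
    + by apply: cvg_at_left_filter; apply: kc; exact: lt_trans (ab n).
  - move=> x; rewrite in_itv /= => /andP[ax _].
    rewrite derive1E; apply: derive_val.
    exact: dk (lt_trans (a0 n) ax).
have Dm : measurable_fun D (EFin \o Dk) := mfun_D Dk cD.
have IsD n : `[a n, b n] `<=` D.
  by move=> x /=; rewrite !in_itv /= andbT => /andP[ax _]; exact: lt_le_trans ax.
have gint : mu.-integrable D (EFin \o (fun x : R => `|K| * (1 + x ^+ 2)^-1)).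
  apply: (integ_bound _ `|K|).
    by move=> x _; apply: cvgM; [exact: cvg_cst|exact: m_cont].
  by move=> x _; rewrite ger0_norm // mulr_ge0 // invr_ge0 addr_ge0 // sqr_ge0.
have cvgI : (\int[mu]_(x in D) ((EFin \o Dk) \_ `[a n, b n]) x)%E @[n --> \oo] -->
    (\int[mu]_(x in D) (EFin \o Dk) x)%E.
  apply: (@dominated_cvg _ _ _ mu D _ (fun n => (EFin \o Dk) \_ `[a n, b n]) (EFin \o Dk)
    (EFin \o (fun x : R => `|K| * (1 + x ^+ 2)^-1))).
  - done.
  - move=> n; apply/measurable_restrict => //.
    apply: measurable_funS Dm => //; exact: subIsetl.
  - move=> x; rewrite /= in_itv /= andbT => x0.
    apply: cvg_near_cst.
    near=> n.
    rewrite patchE mem_set //= in_itv /=; apply/andP; split.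
      rewrite /a invf_ple ?posrE ?ltr0n //.
      apply: (@le_trans _ _ n%:R); last by rewrite ler_nat (leq_trans (leqnSn n) (leqnSn _)).
      by near: n; exact: nbhs_infty_ger.
    apply: (@le_trans _ _ n%:R); last by rewrite ler_nat (leq_trans (leqnSn n) (leqnSn _)).
    by near: n; exact: nbhs_infty_ger.
  - by [].
  - exact gint.
  - move=> n x; rewrite /= in_itv /= andbT => x0.
    rewrite patchE; case: ifPn => _.
      rewrite lee_fin /= (le_trans (bD x x0)) //.
      by rewrite ler_wpM2r ?invr_ge0 ?addr_ge0 ?sqr_ge0 // ler_norm.
    have -> : (point : \bar R) = 0%E by []. 
    by rewrite abse0 lee_fin mulr_ge0 // invr_ge0 addr_ge0 // sqr_ge0.
have E n : (\int[mu]_(x in D) ((EFin \o Dk) \_ `[a n, b n]) x)%E = (k (b n) - k (a n))%:E.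
  by rewrite -integral_mkcondr setIidr // Ik.
move: cvgI; rewrite (eq_cvg _ _ E) => cvgI.
have cvg2 : (k (b n) - k (a n))%:E @[n --> \oo] --> 0%:E.
  apply: cvg_EFin; first exact: nearW.
  rewrite -(subr0 0); apply: cvgB.
    apply: ((cvg_pinftyP k 0).1 koo).
    apply/cvgryPge => r; near=> n.
    apply: (@le_trans _ _ n%:R); last by rewrite ler_nat (leq_trans (leqnSn n) (leqnSn _)).
    by near: n; exact: nbhs_infty_ger.
  apply: ((cvg_at_rightP k 0 0).1 k0); split; first exact: a0.
  have := @cvg_harmonic R; rewrite -cvg_shiftS.
  have -> : a = (fun n => (harmonic n.+1 : R)) by apply/funext => n; rewrite /harmonic.
  by [].
have := cvg_unique _ cvgI cvg2.
by rewrite /int0oo /Rintegral => ->.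
Unshelve. all: by end_near.
Qed.
End H3.
Section H4.
Context {R : realType}.

Definition clamp (t s : R) : R := Num.min (Num.max s 0) t.

Lemma clamp_in (t s : R) : 0 <= s <= t -> clamp t s = s.
Proof. by case/andP=> s0 st; rewrite /clamp max_l // min_l. Qed.
Lemma clamp_lo (t s : R) : 0 <= t -> s <= 0 -> clamp t s = 0.
Proof. by move=> t0 s0; rewrite /clamp max_r // min_l. Qed.
Lemma clamp_hi (t s : R) : 0 <= t -> t <= s -> clamp t s = t.
Proof. by move=> t0 ts; rewrite /clamp max_l ?(le_trans t0) // min_r. Qed.
Lemma clamp_itv (t s : R) : 0 <= t -> 0 <= clamp t s <= t.
Proof.
move=> t0; rewrite /clamp; apply/andP; split.
  by rewrite le_min t0 le_max lexx orbT.
by rewrite ge_min lexx orbT.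
Qed.

Lemma clamp_cont (f : R -> R) (t : R) : 0 < t ->
  {within `[0, t], continuous f} -> continuous (fun s => f (clamp t s)).
Proof.
move=> t0 /(continuous_within_itvP _ t0) [fi f0 ft] x.
have t0' := ltW t0.
case: (ltgtP x 0) => [x0 | x0 | ->].
- apply: cvg_near_cst; near=> y.
  rewrite !clamp_lo // ?(ltW x0) //.
  by apply: ltW; near: y; exact: lt_nbhsl.
- case: (ltgtP x t) => [xt | xt | ->].
  + rewrite /prop_for /continuous_at /= clamp_in ?(ltW x0) ?(ltW xt) //.
    apply: (cvg_trans (near_eq_cvg _)); last by apply: fi; rewrite in_itv /= x0 xt.
    near=> y; rewrite /= clamp_in //; apply/andP; split; apply: ltW.
      by near: y; exact: lt_nbhsr.
    by near: y; exact: lt_nbhsl.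
  + apply: cvg_near_cst; near=> y.
    rewrite !clamp_hi // ?(ltW xt) //.
    by apply: ltW; near: y; exact: lt_nbhsr.
  + apply/left_right_continuousP; split.
    * rewrite /prop_for /continuous_at /= clamp_in ?t0' ?lexx //.
      apply: (cvg_trans (near_eq_cvg _)); last exact: ft.
      near=> y; rewrite /= clamp_in //; apply/andP; split; apply: ltW.
        by near: y; exact: nbhs_left_gt.
      by near: y; exact: nbhs_left_lt.
    * apply: cvg_near_cst; near=> y.
      rewrite !clamp_hi // ?lexx //.
- apply/left_right_continuousP; split.
  + apply: cvg_near_cst; near=> y.
    rewrite !clamp_lo // ?lexx //.
  + rewrite /prop_for /continuous_at /= clamp_in ?t0' ?lexx //.
    apply: (cvg_trans (near_eq_cvg _)); last exact: f0.
    near=> y; rewrite /= clamp_in //; apply/andP; split; apply: ltW.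
      by near: y; exact: nbhs_right_gt.
    by near: y; exact: nbhs_right_lt.
Unshelve. all: by end_near.
Qed.
End H4.
Section H5.
Context {R : realType}.
Notation mu := (@lebesgue_measure R).
Notation D := (`]0%R, +oo[%classic : set R).

Lemma cont_param (phi : R -> R -> R) (t K : R) : 0 < t ->
  (forall s, 0 <= s <= t -> {in D, continuous (phi s)}) ->
  (forall s g, 0 <= s <= t -> 0 < g -> `|phi s g| <= K * (1 + g ^+ 2)^-1) ->
  (forall g, 0 < g -> {within `[0, t], continuous (phi^~ g)}) ->
  {within `[0, t], continuous (fun s => int0oo (phi s))}.
Proof.
move=> t0 cg bd cs.
have t0' := ltW t0.
pose psi s g := phi (clamp t s) g.
have H : {in `]-1, t + 1[%classic, continuous (fun l => \int[mu]_(x in D) psi l x)}.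
  apply: (@continuity_under_integral _ _ _ mu psi D _ (-1) (t + 1) _ _
    (fun g => `|K| * (1 + g ^+ 2)^-1)).
  - by [].
  - move=> x _.
    have h := integ_bound (psi x) K (cg _ (clamp_itv t x t0')) (fun g g0 => bd _ g (clamp_itv t x t0') g0).
    exact h.
  - apply: aeW => g; rewrite /= in_itv /= andbT => g0 x _.
    have h := clamp_cont (phi^~ g) t t0 (cs g g0) x; exact h.
  - have h := integ_bound (fun g => `|K| * (1 + g ^+ 2)^-1) `|K|.
    apply: h.
      by move=> x _; apply: cvgM; [exact: cvg_cst|exact: m_cont].
    by move=> x _; rewrite ger0_norm // mulr_ge0 // invr_ge0 addr_ge0 // sqr_ge0.
  - move=> x _; apply: aeW => g; rewrite /= in_itv /= andbT => g0.
    rewrite (le_trans (bd _ _ (clamp_itv t _ t0') g0)) //.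
    by rewrite ler_wpM2r ?invr_ge0 ?addr_ge0 ?sqr_ge0 // ler_norm.
have H2 : {within `[0, t], continuous (fun l => \int[mu]_(x in D) psi l x)}.
  apply: continuous_in_subspaceT => x; rewrite inE /= in_itv /= => /andP[x0 xt].
  apply: H; rewrite inE /= in_itv /=; apply/andP; split.
    by rewrite (lt_le_trans _ x0) // ltrN10.
  by rewrite (le_lt_trans xt) // ltrDl.
apply: (subspace_eq_continuous _ H2) => x; rewrite inE /= in_itv /= => xi.
by rewrite /int0oo /psi; apply: eq_Rintegral => g _; rewrite clamp_in.
Qed.
End H5.


Section H6.
Context {R : realType}.
Implicit Types (f g : R -> R) (x c df dg : R).

Lemma isdD {f g x df dg} : is_derive x 1 f df -> is_derive x 1 g dg ->
  is_derive x 1 (fun s => f s + g s) (df + dg).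
Proof. move=> hf hg; have h := is_deriveD hf hg; exact h. Qed.

Lemma isdB {f g x df dg} : is_derive x 1 f df -> is_derive x 1 g dg ->
  is_derive x 1 (fun s => f s - g s) (df - dg).
Proof. move=> hf hg; have h := is_deriveB hf hg; exact h. Qed.

Lemma isdM {f g x df dg} : is_derive x 1 f df -> is_derive x 1 g dg ->
  is_derive x 1 (fun s => f s * g s) (f x * dg + g x * df).
Proof. move=> hf hg; have h := is_deriveM hf hg; exact h. Qed.

Lemma isdC c x : is_derive x 1 (fun _ : R => c) 0.
Proof. have h := @is_derive_cst R R R c x 1; exact h. Qed.

Lemma isdId x : is_derive x 1 (fun s : R => s) 1.
Proof. have h := @is_derive_id R R x 1; exact h. Qed.

Lemma isdcB {c f x df} : is_derive x 1 f df ->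
  is_derive x 1 (fun s => c - f s) (- df).
Proof.
move=> hf; have h := isdB (isdC c x) hf.
by rewrite sub0r in h.
Qed.

Lemma isdcM {c f x df} : is_derive x 1 f df ->
  is_derive x 1 (fun s => c * f s) (c * df).
Proof.
move=> hf; have h := isdM (isdC c x) hf.
by rewrite mulr0 addr0 in h.
Qed.

Lemma isd_refl {f} {t x df : R} : is_derive (t - x) 1 f df ->
  is_derive x 1 (fun s => f (t - s)) (- df).
Proof.
move=> hf.
have hs : is_derive x 1 (fun s : R => t - s) (-1) by exact: (isdcB (isdId x)).
have h := @is_derive1_comp _ f (fun s => t - s) x df (-1) hf hs.
by rewrite mulrN1 in h.
Qed.

Lemma isdInv x : x != 0 -> is_derive x 1 (fun s : R => s^-1) (- (x ^+ 2)^-1).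
Proof.
move=> x0; have h := is_deriveV x0 (isdId x).
apply: (is_derive_eq h); exact: mulr1.
Qed.

Lemma derivable_isd {f x} : derivable f x 1 -> is_derive x 1 f (derive1 f x).
Proof. by move=> h; rewrite derive1E; exact: derivableP. Qed.

Lemma isd_cont {f x df} : is_derive x 1 f df -> {for x, continuous f}.
Proof.
by move=> h; apply/differentiable_continuous/derivable1_diffP; case: h.
Qed.

Lemma nb_mul {a b x y : R} : `|a| <= x -> `|b| <= y -> `|a * b| <= x * y.
Proof.
move=> ha hb; rewrite normrM ler_pM //.
Qed.

Lemma nb_add {a b x y : R} : `|a| <= x -> `|b| <= y -> `|a + b| <= x + y.
Proof. by move=> ha hb; rewrite (le_trans (ler_normD _ _)) // lerD. Qed.

Lemma nb_sub {a b x y : R} : `|a| <= x -> `|b| <= y -> `|a - b| <= x + y.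
Proof. by move=> ha hb; rewrite (le_trans (ler_normB _ _)) // lerD. Qed.

Lemma nb_opp {a x : R} : `|a| <= x -> `|- a| <= x.
Proof. by rewrite normrN. Qed.

Lemma nb_cst (a : R) : `|a| <= `|a|.
Proof. by []. Qed.

Lemma cvg_refl_left f (t l : R) : f x @[x --> 0^'+] --> l ->
  (fun s => f (t - s)) x @[x --> t^'-] --> l.
Proof.
move=> hf; apply/cvg_at_leftP => u [ut ucv].
have := (cvg_at_rightP f 0 l).1 hf (fun n => t - u n).
apply; split.
  by move=> n; rewrite subr_gt0.
rewrite -(subrr t); apply: cvgB; [exact: cvg_cst | exact: ucv].
Qed.

Lemma cvg0_lin f (c : R) : (forall x, 0 < x -> `|f x| <= c * x) -> f x @[x --> 0^'+] --> 0.
Proof.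
move=> hf; apply/cvgrPdist_le => e e0.
have c1 : 0 < `|c| + 1 by rewrite ltr_pwDr // ltr01.
near=> y.
have y0 : 0 < y by near: y; exact: nbhs_right_gt.
rewrite sub0r normrN (le_trans (hf _ y0)) //.
have ye : y < e / (`|c| + 1) by near: y; apply: nbhs_right_lt; rewrite divr_gt0.
rewrite (le_trans (ler_wpM2r (ltW y0) (ler_norm c))) //.
rewrite (le_trans (ler_wpM2l (normr_ge0 c) (ltW ye))) //.
by rewrite mulrCA ger_pMr // ler_pdivrMr // mul1r lerDl ler01.
Unshelve. all: by end_near.
Qed.

Lemma cvgoo_inv f (c : R) : (forall x, 0 < x -> `|f x| <= c * x^-1) -> f x @[x --> +oo] --> 0.
Proof.
move=> hf; apply/cvgrPdist_le => e e0.
have c1 : 0 < `|c| + 1 by rewrite ltr_pwDr // ltr01.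
near=> y.
have y0 : 0 < y by near: y; apply: nbhs_pinfty_gt; exact: num_real.
have ye : (`|c| + 1) / e < y by near: y; apply: nbhs_pinfty_gt; exact: num_real.
rewrite sub0r normrN (le_trans (hf _ y0)) //.
rewrite (le_trans (ler_wpM2r _ (ler_norm c))) ?invr_ge0 ?(ltW y0) //.
rewrite ler_pdivrMr // -ler_pdivrMl //.
Unshelve. all: by end_near.
Qed.
End H6.


Section H7.
Context {R : realType}.
Notation mu := (@lebesgue_measure R).
Notation D := (`]0%R, +oo[%classic : set R).

Lemma int_bound (f : R -> R) (C : R) : {in D, continuous f} ->
  (forall g, 0 < g -> `|f g| <= C * (1 + g ^+ 2)^-1) -> `|int0oo f| <= C * (pi / 2).
Proof.
move=> cf bf.
have fi := integ_bound f C cf bf.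
have mi : mu.-integrable D (EFin \o (fun g : R => C * (1 + g ^+ 2)^-1)).
  apply: (integ_bound _ C).
    by move=> x _; apply: cvgM; [exact: cvg_cst|exact: m_cont].
  move=> x x0; rewrite normrM [`|_^-1|]ger0_norm ?invr_ge0 ?addr_ge0 ?sqr_ge0 //.
  rewrite ler_wpM2r ?invr_ge0 ?addr_ge0 ?sqr_ge0 // ger0_norm //.
  have := bf 1 ltr01; have : 0 < (1 + 1 ^+ 2)^-1 :> R by rewrite invr_gt0 addr_gt0 // ?ltr01 // exprn_gt0.
  move=> h1 h2; rewrite -(pmulr_lge0 _ h1); exact: le_trans h2.
have e : int0oo (fun g : R => C * (1 + g ^+ 2)^-1) = C * (pi / 2).
  rewrite /int0oo RintegralZl //; first by rewrite -m_int.
  exact: m_integrable.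
rewrite ler_norml; apply/andP; split.
- have e' : int0oo (fun g : R => - C * (1 + g ^+ 2)^-1) = - C * (pi / 2).
    rewrite /int0oo RintegralZl //; first by rewrite -m_int.
    exact: m_integrable.
  rewrite -mulNr -e'; apply: le_Rintegral => //.
    have h := integrableN mi.
    apply: eq_integrable h => // x _ /=; by rewrite mulNr.
  move=> x; rewrite /= in_itv /= andbT => x0.
  by rewrite mulNr; have := bf x x0; rewrite ler_norml => /andP[].
- rewrite -e; apply: le_Rintegral => //.
  move=> x; rewrite /= in_itv /= andbT => x0.
  by have := bf x x0; rewrite ler_norml => /andP[].
Qed.

Lemma avg_bound (f : R -> R) (C : R) : {in D, continuous f} ->
  (forall g, 0 < g -> `|f g| <= C * (g ^+ 2 / (1 + g ^+ 2))) -> `|avg f| <= C.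
Proof.
move=> cf bf.
have pi0 : 0 < pi :> R := pi_gt0 R.
have bf' g : 0 < g -> `|f g / (1 + g ^+ 2)| <= C * (1 + g ^+ 2)^-1.
  move=> g0; rewrite normrM [`|_^-1|]ger0_norm ?invr_ge0 ?addr_ge0 ?sqr_ge0 //.
  rewrite ler_wpM2r ?invr_ge0 ?addr_ge0 ?sqr_ge0 // (le_trans (bf g g0)) //.
  have C0 : 0 <= C.
    have := bf 1 ltr01; have : 0 < (1 ^+ 2 / (1 + 1 ^+ 2)) :> R.
      by rewrite divr_gt0 ?exprn_gt0 ?addr_gt0 ?ltr01.
    move=> h1 h2; rewrite -(pmulr_lge0 _ h1); exact: le_trans h2.
  rewrite ler_piMr // ler_pdivrMr ?mul1r ?lerDr ?ler01 //.
  by rewrite addr_gt0 // ?ltr01 // exprn_gt0.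
have cf' : {in D, continuous (fun g => f g / (1 + g ^+ 2))}.
  by move=> x xD; apply: cvgM; [exact: cf|exact: m_cont].
rewrite /avg normrM ger0_norm ?divr_ge0 ?(ltW pi0) //.
have ib := int_bound (fun g => f g / (1 + g ^+ 2)) C cf' bf'.
have h2 : 0 <= 2 / pi :> R by rewrite divr_ge0 // ltW.
have := ler_wpM2l h2 ib.
move/le_trans; apply.
have pn : pi != 0 :> R by rewrite gt_eqF.
have eC : 2 / pi * (C * (pi / 2)) = C.
  by move: pn; move: (pi : R) => p pn; field.
by rewrite eC.
Qed.
End H7.
Section H8.
Context {R : realType}.
Notation mu := (@lebesgue_measure R).
Notation D := (`]0%R, +oo[%classic : set R).

Lemma iZ (f : R -> R) (a : R) : mu.-integrable D (EFin \o f) ->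
  mu.-integrable D (EFin \o (fun y => a * f y)).
Proof.
move=> hf.
apply: (@eq_integrable _ _ _ mu D _ (fun y => (a%:E * (EFin \o f) y)%E)).
- by [].
- by move=> y _; rewrite /= EFinM.
- apply: integrableZl => //; exact hf.
Qed.

Lemma iD (f g : R -> R) : mu.-integrable D (EFin \o f) -> mu.-integrable D (EFin \o g) ->
  mu.-integrable D (EFin \o (fun y => f y + g y)).
Proof.
move=> hf hg.
apply: (@eq_integrable _ _ _ mu D _ ((EFin \o f) \+ (EFin \o g))%E).
- by [].
- by move=> y _; rewrite /= EFinD.
- by apply: integrableD.
Qed.

Lemma Rint_lin4 (f1 f2 f3 f4 : R -> R) (a b c d : R) :
  mu.-integrable D (EFin \o f1) -> mu.-integrable D (EFin \o f2) ->
  mu.-integrable D (EFin \o f3) -> mu.-integrable D (EFin \o f4) ->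
  int0oo (fun y => a * f1 y + b * f2 y + c * f3 y + d * f4 y)
  = a * int0oo f1 + b * int0oo f2 + c * int0oo f3 + d * int0oo f4.
Proof.
move=> i1 i2 i3 i4.
rewrite /int0oo RintegralD //; last exact: iZ.
  rewrite RintegralD //; last exact: iZ.
    rewrite RintegralD //; try exact: iZ.
    by rewrite !RintegralZl.
  by apply: iD; exact: iZ.
by apply: iD; [apply: iD|]; exact: iZ.
Qed.
End H8.


Ltac ctac := first [ solve [exact: cvg_cst] | solve [eassumption]
  | (apply: cvgM; [ctac|ctac]) | (apply: cvgD; [ctac|ctac])
  | (apply: cvgB; [ctac|ctac]) | (apply: cvgN; ctac) ].

Theorem lemma2p1 (R : realType)
  (Th1 Th2 : R -> R -> R) (Th01 Th02 : R -> R) (w1 w2 : R -> R -> R)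
  (HTh_init : forall g, 0 <= g -> Th1 0 g = Th01 g /\ Th2 0 g = Th02 g)
  (HTh_dg : forall t g, 0 <= t -> 0 < g ->
     [/\ derivable (fun h => bar Th1 t h) g 1, derivable (fun h => bar Th2 t h) g 1,
         {for g, continuous (dg (bar Th1) t)} & {for g, continuous (dg (bar Th2) t)}])
  (HTh_dt : forall t g, 0 < t -> 0 < g ->
     derivable (fun s => bar Th1 s g) t 1 /\ derivable (fun s => bar Th2 s g) t 1)
  (HTh_t0 : forall g, 0 < g ->
     (fun s => bar Th1 s g) @ 0^'+ --> bar Th1 0 g /\
     (fun s => bar Th2 s g) @ 0^'+ --> bar Th2 0 g)
  (HTh_bd : forall T, 0 <= T -> exists C : R, forall s g, 0 <= s <= T -> 0 < g ->
     [/\ `|bar Th1 s g| <= C * (g ^+ 2 / (1 + g ^+ 2)),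
         `|bar Th2 s g| <= C * (g ^+ 2 / (1 + g ^+ 2)),
         `|g * dg (bar Th1) s g| <= C * (g ^+ 2 / (1 + g ^+ 2)) &
         `|g * dg (bar Th2) s g| <= C * (g ^+ 2 / (1 + g ^+ 2))])
  (HTh_eq1 : forall t g, 0 < t -> 0 < g ->
     dt (bar Th1) t g + 4 * g * dg (bar Th1) t g + 6 * bar Th1 t g
       - 13 * bar Th2 t g = 0)
  (HTh_eq2 : forall t g, 0 < t -> 0 < g ->
     dt (bar Th2) t g + 4 * g * dg (bar Th2) t g + 9 * bar Th2 t g
       - 10 / (1 + g ^+ 2) * (bar Th1 t g + g ^+ 2 * avg (bar Th1 t)) = 0)
  (Hw_dg : forall r g, 0 <= r -> 0 < g ->
     [/\ derivable (fun h => w1 r h) g 1, derivable (fun h => w2 r h) g 1,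
         {for g, continuous (dg w1 r)} & {for g, continuous (dg w2 r)}])
  (Hw_dt : forall r g, 0 < r -> 0 < g ->
     derivable (fun s => w1 s g) r 1 /\ derivable (fun s => w2 s g) r 1)
  (Hw_t0 : forall g, 0 < g ->
     (fun s => w1 s g) @ 0^'+ --> w1 0 g /\ (fun s => w2 s g) @ 0^'+ --> w2 0 g)
  (Hw_bd : forall T, 0 <= T -> exists C : R, forall r g, 0 <= r <= T -> 0 < g ->
     [/\ `|w1 r g| <= C, `|w2 r g| <= C, `|g * dg w1 r g| <= C & `|g * dg w2 r g| <= C])
  (Hw_eq1 : forall r g, 0 < r -> 0 < g ->
     dt w1 r g - 4 * g * dg w1 r g + 10 * w1 r g - 10 / (1 + g ^+ 2) * w2 r g = 0)
  (Hw_eq2 : forall r g, 0 < r -> 0 < g ->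
     dt w2 r g - 4 * g * dg w2 r g + 13 * w2 r g - 13 * w1 r g = 0)
  (Hw_init : forall g, 0 <= g -> w1 0 g = 1 /\ w2 0 g = 1)
  (t : R) (ht : 0 <= t) :
  10 * (\int[(@lebesgue_measure R)]_(s in `[0%R, t]) (avg (bar Th1 s) * kappa w2 (t - s)))
  = 2 / pi * Ifun Th01 Th02
    - 2 / pi * wint (fun g => (Th01 g - Th01 0) * w1 t g + (Th02 g - Th02 0) * w2 t g).
Proof.
have [t0|t0] : t = 0 \/ 0 < t.
  by move: ht; rewrite le_eqVlt => /predU1P[<-|]; [left|right].
  subst t; rewrite set_itv1 Rintegral_set1 mulr0 /Ifun /wint.
  rewrite (_ : int0oo _ = int0oo (fun g => ((Th01 g - Th01 0) + (Th02 g - Th02 0)) / g ^+ 2)) ?subrr //.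
  apply: eq_Rintegral => g; rewrite inE /= in_itv /= andbT => g0.
  by have [-> ->] := Hw_init g (ltW g0); rewrite !mulr1.
have pi0 : 0 < pi :> R := pi_gt0 R.
have [C1 HC1] := HTh_bd t ht.
have [C2 HC2] := Hw_bd t ht.
have C1ge0 : 0 <= C1.
  have [h _ _ _] := HC1 0 1 ltac:(by rewrite lexx ht) ltr01.
  have h1 : 0 < (1 ^+ 2 / (1 + 1 ^+ 2)) :> R.
    by rewrite divr_gt0 ?exprn_gt0 ?addr_gt0 ?ltr01.
  by rewrite -(pmulr_lge0 _ h1); exact: le_trans h.
have C2ge0 : 0 <= C2.
  have [h _ _ _] := HC2 0 1 ltac:(by rewrite lexx ht) ltr01.
  exact: le_trans h.
have sti (s : R) : 0 <= s <= t -> 0 <= t - s <= t.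
  by case/andP => h1 h2; apply/andP; split; lra.
have q1 (g : R) : 0 < g -> g ^+ 2 / (1 + g ^+ 2) <= 1.
  move=> g0; rewrite ler_pdivrMr ?mul1r ?lerDr ?ler01 //.
  by rewrite addr_gt0 // ?ltr01 // exprn_gt0.
have gn0 (g : R) : 0 < g -> g != 0 by move=> g0; rewrite gt_eqF.
have g2n0 (g : R) : 0 < g -> g ^+ 2 != 0 by move=> g0; rewrite gt_eqF // exprn_gt0.
have mn0 (g : R) : 1 + g ^+ 2 != 0 :> R by rewrite gt_eqF // ltr_pwDl // ?ltr01 // sqr_ge0.
have cT1 (g : R) : 0 < g -> {within `[0, t], continuous (fun s => bar Th1 s g)}.
  move=> g0; apply/(continuous_within_itvP _ t0); split.
  - move=> x; rewrite in_itv /= => /andP[x0 xt].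
    exact: isd_cont (derivable_isd (HTh_dt x g x0 g0).1).
  - exact: (HTh_t0 g g0).1.
  - apply: cvg_at_left_filter; exact: isd_cont (derivable_isd (HTh_dt t g t0 g0).1).
have cT2 (g : R) : 0 < g -> {within `[0, t], continuous (fun s => bar Th2 s g)}.
  move=> g0; apply/(continuous_within_itvP _ t0); split.
  - move=> x; rewrite in_itv /= => /andP[x0 xt].
    exact: isd_cont (derivable_isd (HTh_dt x g x0 g0).2).
  - exact: (HTh_t0 g g0).2.
  - apply: cvg_at_left_filter; exact: isd_cont (derivable_isd (HTh_dt t g t0 g0).2).
have cW1 (g : R) : 0 < g -> {within `[0, t], continuous (fun s => w1 (t - s) g)}.
  move=> g0; apply/(continuous_within_itvP _ t0); split.
  - move=> x; rewrite in_itv /= => /andP[x0 xt].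
    have tx : 0 < t - x by rewrite subr_gt0.
    exact: isd_cont (isd_refl (derivable_isd (Hw_dt (t - x) g tx g0).1)).
  - apply: cvg_at_right_filter.
    have tx : 0 < t - 0 by rewrite subr0.
    exact: isd_cont (isd_refl (derivable_isd (Hw_dt (t - 0) g tx g0).1)).
  - rewrite subrr; exact: cvg_refl_left (Hw_t0 g g0).1.
have cW2 (g : R) : 0 < g -> {within `[0, t], continuous (fun s => w2 (t - s) g)}.
  move=> g0; apply/(continuous_within_itvP _ t0); split.
  - move=> x; rewrite in_itv /= => /andP[x0 xt].
    have tx : 0 < t - x by rewrite subr_gt0.
    exact: isd_cont (isd_refl (derivable_isd (Hw_dt (t - x) g tx g0).2)).
  - apply: cvg_at_right_filter.
    have tx : 0 < t - 0 by rewrite subr0.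
    exact: isd_cont (isd_refl (derivable_isd (Hw_dt (t - 0) g tx g0).2)).
  - rewrite subrr; exact: cvg_refl_left (Hw_t0 g g0).2.
have cgT1 (s g : R) : 0 <= s -> 0 < g -> {for g, continuous (fun h => bar Th1 s h)}.
  by move=> s0 g0; have [h _ _ _] := HTh_dg s g s0 g0; exact: isd_cont (derivable_isd h).
have cgT2 (s g : R) : 0 <= s -> 0 < g -> {for g, continuous (fun h => bar Th2 s h)}.
  by move=> s0 g0; have [_ h _ _] := HTh_dg s g s0 g0; exact: isd_cont (derivable_isd h).
have cgdT1 (s g : R) : 0 <= s -> 0 < g -> {for g, continuous (fun h => dg (bar Th1) s h)}.
  by move=> s0 g0; have [_ _ h _] := HTh_dg s g s0 g0.
have cgdT2 (s g : R) : 0 <= s -> 0 < g -> {for g, continuous (fun h => dg (bar Th2) s h)}.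
  by move=> s0 g0; have [_ _ _ h] := HTh_dg s g s0 g0.
have cgW1 (r g : R) : 0 <= r -> 0 < g -> {for g, continuous (fun h => w1 r h)}.
  by move=> s0 g0; have [h _ _ _] := Hw_dg r g s0 g0; exact: isd_cont (derivable_isd h).
have cgW2 (r g : R) : 0 <= r -> 0 < g -> {for g, continuous (fun h => w2 r h)}.
  by move=> s0 g0; have [_ h _ _] := Hw_dg r g s0 g0; exact: isd_cont (derivable_isd h).
have cgdW1 (r g : R) : 0 <= r -> 0 < g -> {for g, continuous (fun h => dg w1 r h)}.
  by move=> s0 g0; have [_ _ h _] := Hw_dg r g s0 g0.
have cgdW2 (r g : R) : 0 <= r -> 0 < g -> {for g, continuous (fun h => dg w2 r h)}.
  by move=> s0 g0; have [_ _ _ h] := Hw_dg r g s0 g0.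
have cinv2 (g : R) : 0 < g -> {for g, continuous (fun h : R => (h ^+ 2)^-1)}.
  move=> g0; apply: cvgV; first exact: g2n0.
  exact: exprn_continuous.
have cinv1 (g : R) : 0 < g -> {for g, continuous (fun h : R => h^-1)}.
  move=> g0; apply: cvgV; first exact: gn0.
  exact: cvg_id.
pose phi (s g : R) := (g ^+ 2)^-1 * (bar Th1 s g * (1 - w1 (t - s) g) + bar Th2 s g * (1 - w2 (t - s) g)).
have o1 : `|1 : R| <= 1 by rewrite normr1.
have bphi (s g : R) : 0 <= s <= t -> 0 < g -> `|phi s g| <= (2 * C1 * (1 + C2)) * (1 + g ^+ 2)^-1.
  move=> hs g0; have [b1 b2 _ _] := HC1 s g hs g0; have [c1 c2 _ _] := HC2 (t - s) g (sti s hs) g0.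
  have p0 : `|(g ^+ 2)^-1| <= (g ^+ 2)^-1 by rewrite ger0_norm // invr_ge0 sqr_ge0.
  apply: le_trans (nb_mul p0 (nb_add (nb_mul b1 (nb_sub o1 c1)) (nb_mul b2 (nb_sub o1 c2)))) _.
  by rewrite le_eqVlt; apply/orP; left; apply/eqP; field; rewrite mn0 gn0.
have cphi_g (s g : R) : 0 <= s <= t -> 0 < g -> {for g, continuous (phi s)}.
  move=> /andP[s0 st] g0.
  have h1 := cinv2 g g0; have h2 := cgT1 s g s0 g0; have h3 := cgT2 s g s0 g0.
  have ts : 0 <= t - s by rewrite subr_ge0.
  have h4 := cgW1 (t - s) g ts g0; have h5 := cgW2 (t - s) g ts g0.
  rewrite /phi; ctac.
have cphi_s (g : R) : 0 < g -> {within `[0, t], continuous (fun s => phi s g)}.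
  move=> g0 x.
  have h2 := cT1 g g0 x; have h3 := cT2 g g0 x.
  have h4 := cW1 g g0 x; have h5 := cW2 g g0 x.
  rewrite /phi; ctac.
have cG : {within `[0, t], continuous (fun s => int0oo (phi s))}.
  apply: (cont_param phi t (2 * C1 * (1 + C2)) t0).
  - by move=> s hs g; rewrite inE /= in_itv /= andbT => g0; exact: cphi_g.
  - exact: bphi.
  - exact: cphi_s.
have bT1' (s g : R) : 0 <= s <= t -> 0 < g -> `|bar Th1 s g| <= C1.
  move=> hs g0; have [b1 _ _ _] := HC1 s g hs g0.
  by rewrite (le_trans b1) // ler_piMr // q1.
have bT2' (s g : R) : 0 <= s <= t -> 0 < g -> `|bar Th2 s g| <= C1.
  move=> hs g0; have [_ b1 _ _] := HC1 s g hs g0.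
  by rewrite (le_trans b1) // ler_piMr // q1.
have pm (g : R) : `|(1 + g ^+ 2)^-1| <= (1 + g ^+ 2)^-1.
  by rewrite ger0_norm // invr_ge0 addr_ge0 // sqr_ge0.
have cA : {within `[0, t], continuous (fun s => avg (bar Th1 s))}.
  have h := cont_param (fun s g => bar Th1 s g / (1 + g ^+ 2)) t C1 t0.
  have {}h : {within `[0, t], continuous (fun s => int0oo (fun g => bar Th1 s g / (1 + g ^+ 2)))}.
    apply: h.
    - move=> s /andP[s0 st] g; rewrite inE /= in_itv /= andbT => g0.
      have h1 := m_cont g; have h2 := cgT1 s g s0 g0; ctac.
    - by move=> s g hs g0; exact: nb_mul (bT1' s g hs g0) (pm g).
    - move=> g g0 x; have h2 := cT1 g g0 x; have h1 := m_cont g; ctac.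
  by move=> x; rewrite /avg; apply: cvgM; [exact: cvg_cst | exact: h].
have cK : {within `[0, t], continuous (fun s => kappa w2 (t - s))}.
  have h := cont_param (fun s g => w2 (t - s) g / (1 + g ^+ 2)) t C2 t0.
  have {}h : {within `[0, t], continuous (fun s => int0oo (fun g => w2 (t - s) g / (1 + g ^+ 2)))}.
    apply: h.
    - move=> s /andP[s0 st] g; rewrite inE /= in_itv /= andbT => g0.
      have ts : 0 <= t - s by rewrite subr_ge0.
      have h1 := m_cont g; have h2 := cgW2 (t - s) g ts g0; ctac.
    - move=> s g hs g0; have [_ c2 _ _] := HC2 (t - s) g (sti s hs) g0.
      exact: nb_mul c2 (pm g).
    - move=> g g0 x; have h2 := cW2 g g0 x; have h1 := m_cont g; ctac.
  by move=> x; rewrite /kappa /avg; apply: cvgM; [exact: cvg_cst | exact: h].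
have cf : {within `[0, t], continuous (fun s => - (5 * pi) * (avg (bar Th1 s) * kappa w2 (t - s)))}.
  move=> x; apply: cvgM; [exact: cvg_cst | apply: cvgM; [exact: cA | exact: cK]].
have Gt : int0oo (phi t) = 0.
  rewrite (_ : int0oo (phi t) = int0oo (fun _ => 0)).
    by rewrite /int0oo Rintegral_cst // mul0r.
  apply: eq_Rintegral => g; rewrite inE /= in_itv /= andbT => g0.
  by rewrite /phi subrr; have [-> ->] := Hw_init g (ltW g0); rewrite !subrr !mulr0 addr0 mulr0.
have t00 : (0 : R) <= 0 <= t by rewrite lexx ht.
pose F1 (g : R) := (g ^+ 2)^-1 * (bar Th1 0 g + bar Th2 0 g).
pose F2 (g : R) := (g ^+ 2)^-1 * (bar Th1 0 g * w1 t g + bar Th2 0 g * w2 t g).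
have iF1 : (@lebesgue_measure R).-integrable `]0%R, +oo[ (EFin \o F1).
  apply: (integ_bound _ (2 * C1)).
    move=> g; rewrite inE /= in_itv /= andbT => g0.
    have h1 := cinv2 g g0; have h2 := cgT1 0 g (lexx 0) g0; have h3 := cgT2 0 g (lexx 0) g0.
    rewrite /F1; ctac.
  move=> g g0; have [b1 b2 _ _] := HC1 0 g t00 g0.
  have p0 : `|(g ^+ 2)^-1| <= (g ^+ 2)^-1 by rewrite ger0_norm // invr_ge0 sqr_ge0.
  apply: le_trans (nb_mul p0 (nb_add b1 b2)) _.
  by rewrite le_eqVlt; apply/orP; left; apply/eqP; field; rewrite mn0 gn0.
have iF2 : (@lebesgue_measure R).-integrable `]0%R, +oo[ (EFin \o F2).
  apply: (integ_bound _ (2 * C1 * C2)).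
    move=> g; rewrite inE /= in_itv /= andbT => g0.
    have h1 := cinv2 g g0; have h2 := cgT1 0 g (lexx 0) g0; have h3 := cgT2 0 g (lexx 0) g0.
    have h4 := cgW1 t g ht g0; have h5 := cgW2 t g ht g0.
    rewrite /F2; ctac.
  move=> g g0; have [b1 b2 _ _] := HC1 0 g t00 g0.
  have [c1 c2 _ _] := HC2 t g (ltac:(by rewrite lexx ht)) g0.
  have p0 : `|(g ^+ 2)^-1| <= (g ^+ 2)^-1 by rewrite ger0_norm // invr_ge0 sqr_ge0.
  apply: le_trans (nb_mul p0 (nb_add (nb_mul b1 c1) (nb_mul b2 c2))) _.
  by rewrite le_eqVlt; apply/orP; left; apply/eqP; field; rewrite mn0 gn0.
have G0 : int0oo (phi 0) = Ifun Th01 Th02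
    - wint (fun g => (Th01 g - Th01 0) * w1 t g + (Th02 g - Th02 0) * w2 t g).
  have [e3 e4] := HTh_init 0 (lexx 0).
  transitivity (int0oo F1 - int0oo F2).
    rewrite /int0oo -RintegralB //; apply: eq_Rintegral => g _.
    by rewrite /phi /F1 /F2 subr0; ring.
  rewrite /Ifun /wint /int0oo; congr (_ - _); apply: eq_Rintegral => g;
    rewrite inE /= in_itv /= andbT => g0; have [e1 e2] := HTh_init g (ltW g0);
    by rewrite /F1 /F2 /bar e1 e2 e3 e4 mulrC.
pose hh (s g : R) := bar Th1 s g * (1 - w1 (t - s) g) + bar Th2 s g * (1 - w2 (t - s) g).
pose kk (s g : R) := g^-1 * hh s g.
pose Dk (s g : R) := g^-1 * (bar Th1 s g * - dg w1 (t - s) g + (1 - w1 (t - s) g) * dg (bar Th1) s g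
   + (bar Th2 s g * - dg w2 (t - s) g + (1 - w2 (t - s) g) * dg (bar Th2) s g))
   + hh s g * - (g ^+ 2)^-1.
have dk (s g : R) : 0 <= s <= t -> 0 < g -> is_derive g 1 (kk s) (Dk s g).
  move=> /andP[s0 st] g0; have ts : 0 <= t - s by rewrite subr_ge0.
  have [a1 a2 _ _] := HTh_dg s g s0 g0; have [b1 b2 _ _] := Hw_dg (t - s) g ts g0.
  have h := isdM (isdInv g (gn0 g g0)) (isdD (isdM (derivable_isd a1) (@isdcB R 1 _ _ _ (derivable_isd b1)))
     (isdM (derivable_isd a2) (@isdcB R 1 _ _ _ (derivable_isd b2)))).
  exact h.
have KD0 : 0 <= C1 * (4 + 6 * C2) by rewrite mulr_ge0 // addr_ge0 // mulr_ge0.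
have bDk (s g : R) : 0 <= s <= t -> 0 < g -> `|Dk s g| <= C1 * (4 + 6 * C2) * (1 + g ^+ 2)^-1.
  move=> hs g0; have [b1 b2 d1 d2] := HC1 s g hs g0; have [c1 c2 e1 e2] := HC2 (t - s) g (sti s hs) g0.
  have p0 : `|(g ^+ 2)^-1| <= (g ^+ 2)^-1 by rewrite ger0_norm // invr_ge0 sqr_ge0.
  have -> : Dk s g = (g ^+ 2)^-1 * ((g * dg (bar Th1) s g) * (1 - w1 (t - s) g) - bar Th1 s g * (g * dg w1 (t - s) g)
     + (g * dg (bar Th2) s g) * (1 - w2 (t - s) g) - bar Th2 s g * (g * dg w2 (t - s) g)
     - (bar Th1 s g * (1 - w1 (t - s) g) + bar Th2 s g * (1 - w2 (t - s) g))).
    by rewrite /Dk /hh; field; rewrite gn0.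
  apply: le_trans (nb_mul p0 (nb_sub (nb_sub (nb_add (nb_sub (nb_mul d1 (nb_sub o1 c1)) (nb_mul b1 e1))
     (nb_mul d2 (nb_sub o1 c2))) (nb_mul b2 e2)) (nb_add (nb_mul b1 (nb_sub o1 c1)) (nb_mul b2 (nb_sub o1 c2))))) _.
  by rewrite le_eqVlt; apply/orP; left; apply/eqP; field; rewrite mn0 gn0.
have cDk (s : R) : 0 <= s <= t -> {in `]0%R, +oo[%classic, continuous (Dk s)}.
  move=> /andP[s0 st] g; rewrite inE /= in_itv /= andbT => g0.
  have ts : 0 <= t - s by rewrite subr_ge0.
  have h1 := cinv2 g g0; have h2 := cgT1 s g s0 g0; have h3 := cgT2 s g s0 g0.
  have h4 := cgW1 (t - s) g ts g0; have h5 := cgW2 (t - s) g ts g0.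
  have h6 := cinv1 g g0; have h7 := cgdT1 s g s0 g0; have h8 := cgdT2 s g s0 g0.
  have h9 := cgdW1 (t - s) g ts g0; have h10 := cgdW2 (t - s) g ts g0.
  rewrite /Dk /hh; ctac.
have K00 : 0 <= 2 * C1 * (1 + C2) by rewrite mulr_ge0 // ?mulr_ge0 // addr_ge0.
have bkk (s g : R) : 0 <= s <= t -> 0 < g -> `|kk s g| <= 2 * C1 * (1 + C2) * (g / (1 + g ^+ 2)).
  move=> hs g0; have [b1 b2 _ _] := HC1 s g hs g0; have [c1 c2 _ _] := HC2 (t - s) g (sti s hs) g0.
  have p0 : `|g^-1| <= g^-1 by rewrite ger0_norm // invr_ge0 ltW.
  apply: le_trans (nb_mul p0 (nb_add (nb_mul b1 (nb_sub o1 c1)) (nb_mul b2 (nb_sub o1 c2)))) _.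
  by rewrite le_eqVlt; apply/orP; left; apply/eqP; field; rewrite mn0 gn0.
have intDk (s : R) : 0 <= s <= t -> int0oo (Dk s) = 0.
  move=> hs; apply: (int_deriv0 (kk s) (Dk s) (C1 * (4 + 6 * C2))).
  - by move=> g g0; exact: dk.
  - exact: cDk.
  - by move=> g g0; exact: bDk.
  - apply: (cvg0_lin _ (2 * C1 * (1 + C2))) => g g0.
    apply: le_trans (bkk s g hs g0) _; rewrite ler_wpM2l //.
    rewrite ler_piMr ?(ltW g0) // invf_le1 ?lerDl ?sqr_ge0 //.
    by rewrite ltr_pwDl // ?ltr01 // sqr_ge0.
  - apply: (cvgoo_inv _ (2 * C1 * (1 + C2))) => g g0.
    apply: le_trans (bkk s g hs g0) _; rewrite ler_wpM2l //.
    rewrite -subr_ge0 (_ : g^-1 - g / (1 + g ^+ 2) = (g * (1 + g ^+ 2))^-1).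
      by rewrite invr_ge0 mulr_ge0 ?(ltW g0) // addr_ge0 // sqr_ge0.
    by field; rewrite mn0 gn0.
have pn : pi != 0 :> R by rewrite gt_eqF.
pose dphi (x y : R) := (y ^+ 2)^-1 * (bar Th1 x y * - - dt w1 (t - x) y + (1 - w1 (t - x) y) * dt (bar Th1) x y
   + (bar Th2 x y * - - dt w2 (t - x) y + (1 - w2 (t - x) y) * dt (bar Th2) x y)).
have dph (x y : R) : 0 < x < t -> 0 < y -> is_derive x 1 (phi^~ y) (dphi x y).
  move=> /andP[x0 xt] y0; have tx : 0 < t - x by rewrite subr_gt0.
  have [a1 a2] := HTh_dt x y x0 y0; have [b1 b2] := Hw_dt (t - x) y tx y0.
  have h := @isdcM R ((y ^+ 2)^-1) _ _ _ (isdD (isdM (derivable_isd a1) (@isdcB R 1 _ _ _ (isd_refl (derivable_isd b1))))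
     (isdM (derivable_isd a2) (@isdcB R 1 _ _ _ (isd_refl (derivable_isd b2))))).
  exact h.
have ident (x y : R) : 0 < x < t -> 0 < y -> dphi x y = -4 * Dk x y + (10 * avg (bar Th1 x)) * (1 + y ^+ 2)^-1
    + (-10) * ((1 + y ^+ 2)^-1 * bar Th1 x y) + (-10 * avg (bar Th1 x)) * ((1 + y ^+ 2)^-1 * w2 (t - x) y).
  move=> /andP[x0 xt] y0; have tx : 0 < t - x by rewrite subr_gt0.
  have e1 := HTh_eq1 x y x0 y0; have e2 := HTh_eq2 x y x0 y0.
  have e3 := Hw_eq1 (t - x) y tx y0; have e4 := Hw_eq2 (t - x) y tx y0.
  have E1 : dt (bar Th1) x y = 13 * bar Th2 x y - 6 * bar Th1 x y - 4 * y * dg (bar Th1) x y.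
    by apply/eqP; rewrite -subr_eq0 -e1; apply/eqP; ring.
  have E2 : dt (bar Th2) x y = 10 / (1 + y ^+ 2) * (bar Th1 x y + y ^+ 2 * avg (bar Th1 x))
      - 9 * bar Th2 x y - 4 * y * dg (bar Th2) x y.
    by apply/eqP; rewrite -subr_eq0 -e2; apply/eqP; ring.
  have E3 : dt w1 (t - x) y = 4 * y * dg w1 (t - x) y - 10 * w1 (t - x) y + 10 / (1 + y ^+ 2) * w2 (t - x) y.
    by apply/eqP; rewrite -subr_eq0 -e3; apply/eqP; ring.
  have E4 : dt w2 (t - x) y = 4 * y * dg w2 (t - x) y - 13 * w2 (t - x) y + 13 * w1 (t - x) y.
    by apply/eqP; rewrite -subr_eq0 -e4; apply/eqP; ring.
  by rewrite /dphi E1 E2 E3 E4 /Dk /hh; field; rewrite mn0 gn0.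
have bA (x : R) : 0 <= x <= t -> `|avg (bar Th1 x)| <= C1.
  move=> hx; have x0 : 0 <= x by case/andP: hx.
  apply: avg_bound.
  - by move=> g; rewrite inE /= in_itv /= andbT => g0; exact: cgT1 _ _ x0 g0.
  - by move=> g g0; have [b1 _ _ _] := HC1 x g hx g0.
pose K1 := 4 * (C1 * (4 + 6 * C2)) + 10 * C1 + 10 * C1 + 10 * C1 * C2.
have K1ge0 : 0 <= K1.
  by rewrite /K1 !addr_ge0 // ?mulr_ge0 // ?addr_ge0 // ?mulr_ge0.
have c10 : `|10 : R| <= 10 by rewrite ger0_norm.
have c4 : `|-4 : R| <= 4 by rewrite normrN ger0_norm.
have c10n : `|-10 : R| <= 10 by rewrite normrN ger0_norm.
have hxx (x : R) : 0 < x < t -> 0 <= x <= t.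
  by case/andP => h1 h2; rewrite ltW // ltW.
have bd1 (x y : R) : 0 < x < t -> 0 < y -> `|partial1of2 phi x y| <= K1 * (1 + y ^+ 2)^-1.
  move=> hx y0; have hx' := hxx x hx.
  rewrite partial1of2E; have [_ ->] := dph x y hx y0.
  rewrite ident //.
  have [_ c2 _ _] := HC2 (t - x) y (sti x hx') y0.
  apply: le_trans (nb_add (nb_add (nb_add (nb_mul c4 (bDk x y hx' y0)) (nb_mul (nb_mul c10 (bA x hx')) (pm y)))
     (nb_mul c10n (nb_mul (pm y) (bT1' x y hx' y0)))) (nb_mul (nb_mul c10n (bA x hx')) (nb_mul (pm y) c2))) _.
  by rewrite le_eqVlt; apply/orP; left; apply/eqP; rewrite /K1; ring.
have iphi (x : R) : 0 <= x <= t -> (@lebesgue_measure R).-integrable `]0%R, +oo[ (EFin \o phi x).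
  move=> hx; apply: (integ_bound _ (2 * C1 * (1 + C2))).
    by move=> g; rewrite inE /= in_itv /= andbT => g0; exact: cphi_g.
  by move=> g g0; exact: bphi.
have DU (x : R) : 0 < x < t ->
   derivable (fun s => int0oo (phi s)) x 1 /\
   derive1 (fun s => int0oo (phi s)) x = \int[(@lebesgue_measure R)]_(y in `]0%R, +oo[) partial1of2 phi x y.
  move=> hx.
  have Ia : `]0%R, t[%classic x by rewrite /= in_itv /= hx.
  have intf : forall x0, `]0%R, t[%classic x0 -> (@lebesgue_measure R).-integrable `]0%R, +oo[ (EFin \o phi x0).
    by move=> x0; rewrite /= in_itv /= => hx0; exact: iphi (hxx x0 hx0).
  have derf1 : forall x0 y, `]0%R, t[%classic x0 -> `]0%R, +oo[%classic y -> derivable (phi^~ y) x0 1.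
    move=> x0 y; rewrite /= !in_itv /= andbT => hx0 y0.
    by have [] := dph x0 y hx0 y0.
  have Gge0 : forall y : R, 0 <= K1 * (1 + y ^+ 2)^-1.
    by move=> y; rewrite mulr_ge0 // invr_ge0 addr_ge0 // sqr_ge0.
  have intG : (@lebesgue_measure R).-integrable `]0%R, +oo[ (EFin \o (fun y => K1 * (1 + y ^+ 2)^-1)).
    apply: (integ_bound _ K1).
      by move=> y _; apply: cvgM; [exact: cvg_cst|exact: m_cont].
    by move=> y _; rewrite ger0_norm.
  have Gub : forall x0 y, `]0%R, t[%classic x0 -> `]0%R, +oo[%classic y ->
      `|partial1of2 phi x0 y| <= K1 * (1 + y ^+ 2)^-1.
    move=> x0 y; rewrite /= !in_itv /= andbT => hx0 y0.
    exact: bd1.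
  split.
    have h := @derivable_under_integral R _ _ (@lebesgue_measure R) phi `]0%R, +oo[ ltac:(by []) x 0 t
       Ia intf derf1 (fun y => K1 * (1 + y ^+ 2)^-1) Gge0 intG Gub.
    exact h.
  have h := @differentiation_under_integral R _ _ (@lebesgue_measure R) phi `]0%R, +oo[ ltac:(by []) x 0 t
     Ia intf derf1 (fun y => K1 * (1 + y ^+ 2)^-1) Gge0 intG Gub.
  exact h.
have pp : pi / 2 * (2 / pi) = 1 :> R by move: pn; move: (pi : R) => p pn; field.
have eA (x : R) : int0oo (fun y => (1 + y ^+ 2)^-1 * bar Th1 x y) = pi / 2 * avg (bar Th1 x).
  rewrite /avg mulrA pp mul1r; apply: eq_Rintegral => y _; by rewrite mulrC.
have eK (x : R) : int0oo (fun y => (1 + y ^+ 2)^-1 * w2 (t - x) y) = pi / 2 * kappa w2 (t - x).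
  rewrite /kappa /avg mulrA pp mul1r; apply: eq_Rintegral => y _; by rewrite mulrC.
have dGE (x : R) : 0 < x < t ->
    derive1 (fun s => int0oo (phi s)) x = - (5 * pi) * (avg (bar Th1 x) * kappa w2 (t - x)).
  move=> hx; have hx' := hxx x hx; rewrite (DU x hx).2.
  have ts : 0 <= t - x by case/andP: hx' => _ h; rewrite subr_ge0.
  have x0 : 0 <= x by case/andP: hx'.
  have i1 : (@lebesgue_measure R).-integrable `]0%R, +oo[ (EFin \o Dk x).
    have h := integ_bound (Dk x) _ (cDk x hx') (fun g g0 => bDk x g hx' g0); exact h.
  have i2 : (@lebesgue_measure R).-integrable `]0%R, +oo[ (EFin \o (fun y : R => (1 + y ^+ 2)^-1)).
    have h := @m_integrable R; exact h.
  have i3 : (@lebesgue_measure R).-integrable `]0%R, +oo[ (EFin \o (fun y => (1 + y ^+ 2)^-1 * bar Th1 x y)).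
    apply: (integ_bound _ C1).
      move=> g; rewrite inE /= in_itv /= andbT => g0.
      have h1 := m_cont g; have h2 := cgT1 x g x0 g0; ctac.
    by move=> y y0; rewrite [X in `|X|]mulrC; exact: nb_mul (bT1' x y hx' y0) (pm y).
  have i4 : (@lebesgue_measure R).-integrable `]0%R, +oo[ (EFin \o (fun y => (1 + y ^+ 2)^-1 * w2 (t - x) y)).
    apply: (integ_bound _ C2).
      move=> g; rewrite inE /= in_itv /= andbT => g0.
      have h1 := m_cont g; have h2 := cgW2 (t - x) g ts g0; ctac.
    move=> y y0; have [_ c2 _ _] := HC2 (t - x) y (sti x hx') y0.
    by rewrite [X in `|X|]mulrC; exact: nb_mul c2 (pm y).
  transitivity (int0oo (fun y => -4 * Dk x y + (10 * avg (bar Th1 x)) * (1 + y ^+ 2)^-1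
    + (-10) * ((1 + y ^+ 2)^-1 * bar Th1 x y) + (-10 * avg (bar Th1 x)) * ((1 + y ^+ 2)^-1 * w2 (t - x) y))).
    apply: eq_Rintegral => y; rewrite inE /= in_itv /= andbT => y0.
    by rewrite partial1of2E; have [_ ->] := dph x y hx y0; rewrite ident.
  rewrite (Rint_lin4 (Dk x) (fun y => (1 + y ^+ 2)^-1) (fun y => (1 + y ^+ 2)^-1 * bar Th1 x y)
     (fun y => (1 + y ^+ 2)^-1 * w2 (t - x) y) (-4) (10 * avg (bar Th1 x)) (-10) (-10 * avg (bar Th1 x)) i1 i2 i3 i4).
  rewrite intDk // m_int eA eK.
  have E : forall p a k : R, -4 * 0 + 10 * a * (p / 2) + -10 * (p / 2 * a) + -10 * a * (p / 2 * k) = - (5 * p) * (a * k) by move=> p a k; field.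
  exact: E.
have [_ GL GR] := (continuous_within_itvP _ t0).1 cG.
have dGd : {in `]0%R, t[, forall x, derivable (fun s => int0oo (phi s)) x 1}.
  by move=> x; rewrite in_itv /= => hx; exact: (DU x hx).1.
have dGE' : {in `]0%R, t[, derive1 (fun s => int0oo (phi s)) =1
    (fun s => - (5 * pi) * (avg (bar Th1 s) * kappa w2 (t - s)))}.
  by move=> x; rewrite in_itv /= => hx; exact: dGE.
have FT := continuous_FTC2 t0 cf (And3 dGd GL GR) dGE'.
have iAK : (@lebesgue_measure R).-integrable `[0%R, t] (EFin \o (fun s => avg (bar Th1 s) * kappa w2 (t - s))).
  apply: continuous_compact_integrable; first exact: segment_compact.
  by move=> x; apply: cvgM; [exact: cA | exact: cK].
have FT' : \int[(@lebesgue_measure R)]_(s in `[0%R, t]) (- (5 * pi) * (avg (bar Th1 s) * kappa w2 (t - s)))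
    = int0oo (phi t) - int0oo (phi 0).
  by rewrite /Rintegral FT -EFinB.
rewrite RintegralZl // Gt G0 sub0r in FT'.
have e : 5 * pi * \int[(@lebesgue_measure R)]_(s in `[0%R, t]) (avg (bar Th1 s) * kappa w2 (t - s))
   = Ifun Th01 Th02 - wint (fun g => (Th01 g - Th01 0) * w1 t g + (Th02 g - Th02 0) * w2 t g).
  by rewrite -[LHS]opprK -mulNr FT' opprK.
rewrite -mulrBr -e.
by move: pn; move: (pi : R) => p pn; field.
Qed.
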